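(* Let $p,q\ge2$ and $n\ge1$. If $A\in\Lambda_1(p,n)$ and $B\in\Lambda_1(q,n)$, then $A\times B\in\Lambda_1(p+q-2,n)$.
   Context: Let $I_n=\{1,\dots,n\}$. A $d$-dimensional matrix of order $n$ is a function $I_n^d\to\mathbb R$; write $a_{i_1\cdots i_d}=A(i_1,\dots,i_d)$. A line is the set of positions obtained by varying one coordinate and fixing the others. $\Lambda_1(d,n)$ is the set of $(0,1)$-valued $d$-dimensional matrices of order $n$ with exactly one $1$ in each line. For a $p$-dimensional $A$ and a $q$-dimensional $B$ of order $n$, the product $A\times B$ is the $(p+q-2)$-dimensional matrix of order $n$ with $(A\times B)_{i_1\cdots i_{p+q-2}}=\sum_{j=1}^n a_{i_1\cdots i_{p-1}j}\,b_{j i_p\cdots i_{p+q-2}}$. *)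

(* Defs.v *)
From HB Require Import structures.
From mathcomp Require Import all_boot all_order all_algebra.
From mathcomp Require Export reals.
Set Implicit Arguments. Unset Strict Implicit. Unset Printing Implicit Defensive.
Import Order.TTheory GRing.Theory Num.Theory.
Local Open Scope ring_scope.

(* A position in I_n^d : a function 'I_d -> 'I_n (coordinate k is the
   (k+1)-th index i_{k+1}). *)
Definition pos (d n : nat) := {ffun 'I_d -> 'I_n}.

Definition hmatrix (R : Type) (d n : nat) := pos d n -> R.

Definition setc (d n : nat) (x : pos d n) (k : 'I_d) (j : 'I_n) : pos d n :=
  [ffun l => if l == k then j else x l].

(* Lambda_1(d,n): (0,1)-valued, exactly one 1 in each line. A line is
   { setc x k j | j in I_n } for a direction k and base position x. *)
Definition Lambda1 (R : realType) (d n : nat) (A : hmatrix R d n) : Prop :=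
  (forall x, A x = 0 \/ A x = 1) /\
  (forall (k : 'I_d) (x : pos d n), #|[set j : 'I_n | A (setc x k j) == 1]| = 1%N).

Definition getc (m n : nat) (i : pos m n) (k : nat) (dflt : 'I_n) : 'I_n :=
  if insub k is Some k' then i k' else dflt.

(* (i_1..i_{p-1}, j) *)
Definition posA (p q n : nat) (i : pos (p + q - 2) n) (j : 'I_n) : pos p n :=
  [ffun k : 'I_p => if (k < p.-1)%N then getc i k j else j].
(* (j, i_p .. i_{p+q-2}) *)
Definition posB (p q n : nat) (i : pos (p + q - 2) n) (j : 'I_n) : pos q n :=
  [ffun k : 'I_q => if k == 0%N :> nat then j else getc i (p.-1 + k.-1) j].

Definition hmul (R : realType) (p q n : nat) (A : hmatrix R p n) (B : hmatrix R q n)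
  : hmatrix R (p + q - 2) n :=
  fun i => \sum_(j < n) A (@posA p q n i j) * B (@posB p q n i j).

(* Main.v *)
Require Import Defs.
From HB Require Import structures.
From mathcomp Require Import all_boot all_order all_algebra reals.
From mathcomp Require Import zify.
Set Implicit Arguments. Unset Strict Implicit. Unset Printing Implicit Defensive.
Import Order.TTheory GRing.Theory Num.Theory.
Local Open Scope ring_scope.

Lemma getc_setc d n (x : pos d n) (k : 'I_d) t m j :
  getc (setc x k t) m j = if m == nat_of_ord k then t else getc x m j.
Proof.
rewrite /getc; case: insubP => [m' _ E|Hm]; first by rewrite -E ffunE.
case: eqP => // E; move: Hm; rewrite E; by rewrite ltn_ord.
Qed.

Lemma getc_dflt d n (x : pos d n) m j j' : (m < d)%N -> getc x m j = getc x m j'.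
Proof. by rewrite /getc; case: insubP => // /negP. Qed.

Lemma line_unique (R : realType) d n (A : hmatrix R d n) (HA : Lambda1 A) k x :
  exists c, forall j, A (setc x k j) = if j == c then 1 else 0.
Proof.
case: HA => H01 Hl; have [c Hc] := cards1P (introT eqP (Hl k x)).
exists c => j; have : (j \in [set j | A (setc x k j) == 1]) = (j \in [set c]) by rewrite Hc.
rewrite !inE; case: (j =P c) => [_ /eqP //|_ H].
by case: (H01 (setc x k j)) => // E; rewrite E eqxx in H.
Qed.

Lemma hmul_A (R : realType) p q n (A : hmatrix R p n) (B : hmatrix R q n) i c :
  (forall j, A (@posA p q n i j) = if j == c then 1 else 0) ->
  hmul A B i = B (@posB p q n i c).
Proof.
move=> H; rewrite /hmul (bigD1 c) //= H eqxx mul1r big1 ?addr0 // => j /negbTE Hj.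
by rewrite H Hj mul0r.
Qed.

Lemma hmul_B (R : realType) p q n (A : hmatrix R p n) (B : hmatrix R q n) i c :
  (forall j, B (@posB p q n i j) = if j == c then 1 else 0) ->
  hmul A B i = A (@posA p q n i c).
Proof.
move=> H; rewrite /hmul (bigD1 c) //= H eqxx mulr1 big1 ?addr0 // => j /negbTE Hj.
by rewrite H Hj mulr0.
Qed.

Theorem corollary3p6 (R : realType) (p q n : nat) (hp : (2 <= p)%N) (hq : (2 <= q)%N)
  (hn : (1 <= n)%N) (A : hmatrix R p n) (B : hmatrix R q n) :
  Lambda1 A -> Lambda1 B -> Lambda1 (hmul A B).
Proof.
move=> HA HB.
have j0 : 'I_n := Ordinal hn.
have kpP : (p.-1 < p)%N by lia.
pose kp : 'I_p := Ordinal kpP.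
have k0P : (0 < q)%N by lia.
pose k0 : 'I_q := Ordinal k0P.
have F1 : forall i j, @posA p q n i j = setc (@posA p q n i j0) kp j.
  move=> i j; apply/ffunP => l; rewrite !ffunE.
  have -> : (l == kp) = (nat_of_ord l == p.-1) by [].
  have Hlp := ltn_ord l; case: eqP => E; case: ltnP => Hl; try lia; try done.
  by apply: getc_dflt; lia.
have F2 : forall i j, @posB p q n i j = setc (@posB p q n i j0) k0 j.
  move=> i j; apply/ffunP => l; rewrite !ffunE.
  have -> : (l == k0) = (nat_of_ord l == 0%N) by [].
  case: eqP => // Hl; apply: getc_dflt; have := ltn_ord l; lia.
split.
  move=> i; have [c Hc] := line_unique HA kp (@posA p q n i j0).
  rewrite (@hmul_A _ _ _ _ _ _ _ c); first by case: HB => H _; apply: H.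
  by move=> j; rewrite F1 Hc.
move=> k x.
case: (ltnP k p.-1) => Hk.
  have [c Hc] := line_unique HB k0 (@posB p q n x j0).
  have kP : (k < p)%N by lia.
  pose k' : 'I_p := Ordinal kP.
  have E1 : forall t j, @posB p q n (setc x k t) j = @posB p q n x j.
    move=> t j; apply/ffunP => l; rewrite !ffunE getc_setc.
    by case: eqP => // _; case: eqP => //; lia.
  have E2 : forall t, @posA p q n (setc x k t) c = setc (@posA p q n x c) k' t.
    move=> t; apply/ffunP => l; rewrite !ffunE getc_setc.
    have -> : (l == k') = (nat_of_ord l == nat_of_ord k) by [].
    case: ltnP => Hl; case: eqP => //; lia.
  case: HA => _ Hl; apply: eq_trans (Hl k' (@posA p q n x c)); apply: eq_card => t; rewrite !inE.
  rewrite (@hmul_B _ _ _ _ _ _ _ c) ?E2 // => j; by rewrite E1 F2 Hc.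
have [c Hc] := line_unique HA kp (@posA p q n x j0).
have kP : (nat_of_ord k - p.-1 + 1 < q)%N by have := ltn_ord k; lia.
pose k' : 'I_q := Ordinal kP.
have E1 : forall t j, @posA p q n (setc x k t) j = @posA p q n x j.
  move=> t j; apply/ffunP => l; rewrite !ffunE getc_setc.
  by case: ltnP => // Hl; case: eqP => //; lia.
have E2 : forall t, @posB p q n (setc x k t) c = setc (@posB p q n x c) k' t.
  move=> t; apply/ffunP => l; rewrite !ffunE getc_setc.
  have -> : (l == k') = (nat_of_ord l == nat_of_ord k - p.-1 + 1)%N by [].
  have := ltn_ord k; have := ltn_ord l.
  case: (nat_of_ord l =P 0%N) => H0; case: (nat_of_ord l =P (nat_of_ord k - p.-1 + 1)%N) => H1;
    case: (p.-1 + (nat_of_ord l).-1 =P nat_of_ord k) => H2 //; lia.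
case: HB => _ Hl; apply: eq_trans (Hl k' (@posB p q n x c)); apply: eq_card => t; rewrite !inE.
rewrite (@hmul_A _ _ _ _ _ _ _ c) ?E2 // => j; by rewrite E1 F1 Hc.
Qed.
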